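(* The log-exp-supremum is transitive: for all finite non-empty multi-sets $\mathcal X$ and $\mathcal Y$ of real symmetric $2\times2$ matrices, $$\mathrm{Sup}_{\mathrm{LE}}(\mathcal X\cup\mathcal Y)=\mathrm{Sup}_{\mathrm{LE}}\big(\{\mathrm{Sup}_{\mathrm{LE}}(\mathcal X),\mathrm{Sup}_{\mathrm{LE}}(\mathcal Y)\}\big),$$ where $\cup$ denotes multi-set union.
   Context: For a finite multi-set $\mathcal X=\{X_1,\dots,X_n\}$ of real symmetric $2\times2$ matrices, the log-exp-supremum is $\mathrm{Sup}_{\mathrm{LE}}(\mathcal X):=\lim_{m\to\infty}\frac1m\log\sum_{i=1}^n\exp(mX_i)$, with $\exp,\log$ the matrix exponential and logarithm. *)

(* Defs.v *)
From HB Require Import structures.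
From mathcomp Require Import all_boot all_order all_algebra.
From mathcomp Require Import all_classical all_reals all_analysis.
Set Implicit Arguments. Unset Strict Implicit. Unset Printing Implicit Defensive.
Import Order.TTheory GRing.Theory Num.Theory.
Import numFieldNormedType.Exports.
Local Open Scope classical_set_scope.
Local Open Scope ring_scope.

Definition symmetric2 {R : realType} (A : 'M[R]_2) : Prop := A^T = A.

Definition expm {R : realType} (A : 'M[R]_2) : 'M[R]_2 :=
  limn (series (fun k : nat => (k`!%:R)^-1 *: A ^+ k)).

(* matrix logarithm (of a positive definite symmetric matrix S): the
   (unique) real symmetric matrix L with exp(L) = S. *)
Definition logm {R : realType} (S : 'M[R]_2) : 'M[R]_2 :=
  get [set L : 'M[R]_2 | symmetric2 L /\ expm L = S].

Definition SupLE {R : realType} (X : seq 'M[R]_2) : 'M[R]_2 :=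
  limn (fun m : nat =>
          (m%:R)^-1 *: logm (\sum_(Xi <- X) expm (m%:R *: Xi))).

(* Main.v *)
Require Import Defs.
From mathcomp Require Import all_boot all_order all_algebra.
From mathcomp Require Import all_classical all_reals all_analysis.
From mathcomp Require Import ring lra.
Import Order.TTheory GRing.Theory Num.Theory.
Import numFieldNormedType.Exports.
Set Implicit Arguments. Unset Strict Implicit.
Local Open Scope ring_scope.

Section M2.
Variable R : realType.
Implicit Types (A B P Q : 'M[R]_2).

Lemma ord2 (i : 'I_2) : i = 0 \/ i = 1.
Proof. case: i => [[|[|//]]] Hi; [left|right]; exact/val_inj. Qed.

Lemma mul2E A B i j : (A *m B) i j = A i 0 * B 0 j + A i 1 * B 1 j.
Proof. rewrite mxE !big_ord_recl big_ord0 addr0.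
have -> : lift ord0 ord0 = 1 :> 'I_2 by exact/val_inj.
by have -> : ord0 = 0 :> 'I_2 by exact/val_inj.
Qed.

Lemma one2E i j : (1 : 'M[R]_2) i j = (i == j)%:R.
Proof. by rewrite mxE. Qed.

Lemma mx2P A B : A 0 0 = B 0 0 -> A 0 1 = B 0 1 -> A 1 0 = B 1 0 -> A 1 1 = B 1 1 -> A = B.
Proof.
move=> h1 h2 h3 h4; apply/matrixP => i j.
by case: (ord2 i) => ->; case: (ord2 j) => ->.
Qed.

Definition isproj P := P 0 1 = P 1 0 /\ P 0 0 + P 1 1 = 1 /\ P 0 0 * P 1 1 = P 0 1 ^+ 2.

Definition spec (a b : R) P : 'M[R]_2 := a *: P + b *: (1 - P).

Definition qf A (u v : R) := A 0 0 * u ^+ 2 + (A 0 1 + A 1 0) * u * v + A 1 1 * v ^+ 2.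

Lemma qfD A B u v : qf (A + B) u v = qf A u v + qf B u v.
Proof. rewrite /qf !mxE; ring. Qed.
Lemma qfZ c A u v : qf (c *: A) u v = c * qf A u v.
Proof. rewrite /qf !mxE; ring. Qed.
Lemma qfB A B u v : qf (A - B) u v = qf A u v - qf B u v.
Proof. rewrite /qf !mxE; ring. Qed.
Lemma qf1 u v : qf 1 u v = u ^+ 2 + v ^+ 2.
Proof. rewrite /qf !mxE /=; ring. Qed.

Lemma qf_spec a b P u v : qf (spec a b P) u v = a * qf P u v + b * qf (1 - P) u v.
Proof. by rewrite /spec qfD !qfZ. Qed.

Lemma isprojC P : isproj P -> isproj (1 - P).
Proof.
move=> [h1 [h2 h3]]; rewrite /isproj !mxE /=.
split; first by rewrite h1.
split; [lra | nra].
Qed.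
Lemma specE a b P i j : spec a b P i j = a * P i j + b * ((i == j)%:R - P i j).
Proof. by rewrite !mxE. Qed.

Lemma specM a b c d P : isproj P -> spec a b P * spec c d P = spec (a*c) (b*d) P.
Proof.
move=> [h1 [h2 h3]].
have e2 : P 1 1 = 1 - P 0 0 by lra.
rewrite e2 in h3.
have e3 : (a-b)*(c-d)*(P 0 0 * (1 - P 0 0) - P 0 1 ^+ 2) = 0 by rewrite h3 subrr mulr0.
apply: mx2P; rewrite -mulmxE mul2E !specE /= -?h1 ?e2; lra.
Qed.
Lemma specX a b P k : isproj P -> spec a b P ^+ k = spec (a ^+ k) (b ^+ k) P.
Proof.
move=> hP; elim: k => [|k IH].
  by rewrite !expr0 /spec !scale1r addrC subrK.
by rewrite exprS IH specM // -!exprS.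
Qed.

Lemma expm_spec a b P : isproj P -> expm (spec a b P) = spec (expR a) (expR b) P.
Proof.
move=> hP; rewrite /expm.
have -> : series (fun k : nat => (k`!%:R)^-1 *: spec a b P ^+ k) =
   (fun n => series (exp_coeff a) n *: P + series (exp_coeff b) n *: (1 - P)).
  apply/funext => n; rewrite /series /= !scaler_suml -big_split /=.
  apply: eq_bigr => k _; rewrite specX // /spec /exp_coeff /= scalerDr !scalerA.
  by rewrite ![_^-1 * _]mulrC.
apply: (cvg_lim (@norm_hausdorff _ _)); apply: cvgD; apply: cvgZr_tmp; exact: is_cvg_series_exp_coeff.
Qed.
Lemma spec_alt a b P : spec a b P = b%:M + (a - b) *: P.
Proof. rewrite /spec scalerBl scalerBr -scalemx1; apply/matrixP=> i j; rewrite !mxE; ring. Qed.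

Lemma spectral A : A 0 1 = A 1 0 -> exists a b P, isproj P /\ b <= a /\ A = spec a b P.
Proof.
move=> hA.
pose x := A 0 0; pose y := A 0 1; pose z := A 1 1.
pose s := ((x - z) / 2) ^+ 2 + y ^+ 2.
have s0 : 0 <= s by rewrite /s addr_ge0 // sqr_ge0.
pose d := Num.sqrt s.
have hd : d ^+ 2 = s by rewrite /d sqr_sqrtr.
have d0 : 0 <= d by rewrite /d sqrtr_ge0.
have [dz|dnz] := eqVneq d 0.
  have s00 : s = 0 by rewrite -hd dz expr0n.
  move/eqP: s00; rewrite /s paddr_eq0 ?sqr_ge0 // !sqrf_eq0 => /andP[/eqP h1 /eqP y0].
  have xz : x = z by move: h1 => /(congr1 (fun t => t * 2)); rewrite mul0r divfK ?pnatr_eq0 // => /eqP; rewrite subr_eq0 => /eqP.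
  exists x, x, (delta_mx 0 0); split.
    rewrite /isproj !mxE /=; split => //; split; ring.
  split => //; rewrite spec_alt subrr scale0r addr0.
  apply: mx2P; rewrite !mxE /= ?mulr1n ?mulr0n //.
  by rewrite -hA; exact: y0.
have dp : 0 < d by rewrite lt_def dnz d0.
pose b := (x + z) / 2 - d.
pose k := (2 * d)^-1.
have hk : k * (2 * d) = 1 by rewrite /k mulVf // mulf_neq0 // pnatr_eq0.
exists (b + 2 * d), b, (k *: (A - b%:M)); split; last split.
- rewrite /isproj !mxE /= !mulr1n !mulr0n !subr0 -hA; split => //.
  have hk2 : k * d = 2^-1 by apply: (@mulfI _ 2); rewrite ?pnatr_eq0 //; rewrite mulrA [2 * k]mulrC -mulrA hk mulfV // pnatr_eq0.
  split.
    rewrite -mulrDr; have -> : A 0 0 - b + (A 1 1 - b) = 2 * d by rewrite /b -/x -/z; field.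
    exact: hk.
  rewrite mulrA [_ * k]mulrC mulrA -expr2 -mulrA [RHS]exprMn.
  congr (_ * _).
  rewrite -/x -/z -/y /b; rewrite /s in hd; nra.
- by rewrite lerDl mulr_ge0.
- rewrite spec_alt addrAC subrr add0r scalerA mulrC hk scale1r.
  by rewrite addrC subrK.
Qed.
Lemma qf_proj_ge0 P u v : isproj P -> 0 <= qf P u v.
Proof.
move=> [h1 [h2 h3]].
have e2 : P 1 1 = 1 - P 0 0 by lra.
rewrite e2 in h3.
have -> : qf P u v = (P 0 0 * u + P 0 1 * v) ^+ 2 + (P 0 1 * u + (1 - P 0 0) * v) ^+ 2.
  have e : (u ^+ 2 + v ^+ 2) * (P 0 0 * (1 - P 0 0) - P 0 1 ^+ 2) = 0 by rewrite h3 subrr mulr0.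
  rewrite /qf -h1 e2; lra.
by rewrite addr_ge0 // sqr_ge0.
Qed.

Lemma qf_compl P u v : qf (1 - P) u v = u ^+ 2 + v ^+ 2 - qf P u v.
Proof. by rewrite qfB qf1. Qed.

Lemma kerv P : isproj P -> exists u v, 0 < u ^+ 2 + v ^+ 2 /\
  forall Q, isproj Q -> qf Q u v = (u ^+ 2 + v ^+ 2) * ((Q 0 0 - P 0 0) ^+ 2 + (Q 0 1 - P 0 1) ^+ 2).
Proof.
move=> [h1 [h2 h3]].
have e2 : P 1 1 = 1 - P 0 0 by lra.
rewrite e2 in h3.
have [p1|p1] := eqVneq (P 0 0) 1.
  have q0 : P 0 1 = 0.
    by move: h3; rewrite p1 subrr mulr0 => /esym/eqP; rewrite sqrf_eq0 => /eqP.
  exists 0, 1; split; first by rewrite expr0n /= add0r expr1n ltr01.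
  move=> Q [g1 [g2 g3]].
  have f2 : Q 1 1 = 1 - Q 0 0 by lra.
  rewrite f2 in g3.
  rewrite /qf p1 q0 f2 expr0n expr1n /=; lra.
exists (1 - P 0 0), (- P 0 1); split.
  have : 0 < (1 - P 0 0) ^+ 2 by rewrite exprn_gt0 // lt_def subr_eq0 eq_sym p1 /=; rewrite subr_ge0; nra.
  by move=> ?; rewrite ltr_wpDr // sqr_ge0.
move=> Q [g1 [g2 g3]].
have f2 : Q 1 1 = 1 - Q 0 0 by lra.
rewrite f2 in g3.
have n1 : (1 - P 0 0) ^+ 2 + (- P 0 1) ^+ 2 = 1 - P 0 0 by rewrite sqrrN; lra.
rewrite n1.
have Eq : P 0 1 ^+ 2 - P 0 0 * (1 - P 0 0) = 0 by rewrite h3 subrr.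
have Er : Q 0 1 ^+ 2 - Q 0 0 * (1 - Q 0 0) = 0 by rewrite g3 subrr.
have H1 : (1 - Q 0 0) * (P 0 1 ^+ 2 - P 0 0 * (1 - P 0 0)) = 0 by rewrite Eq mulr0.
have H2 : (1 - P 0 0) * (P 0 1 ^+ 2 - P 0 0 * (1 - P 0 0)) = 0 by rewrite Eq mulr0.
have H3 : (1 - P 0 0) * (Q 0 1 ^+ 2 - Q 0 0 * (1 - Q 0 0)) = 0 by rewrite Er mulr0.
rewrite /qf -g1 f2; lra.
Qed.
Lemma sym01 A : symmetric2 A -> A 0 1 = A 1 0.
Proof. by move=> h; rewrite -{1}h mxE. Qed.

Lemma sym_spec a b P : isproj P -> symmetric2 (spec a b P).
Proof.
move=> [h1 _]; rewrite /symmetric2; apply: mx2P; rewrite !mxE //=.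
- by rewrite -h1.
- by rewrite h1.
Qed.

Lemma spec_swap a b P : spec a b P = spec b a (1 - P).
Proof. by apply/matrixP=> i j; rewrite !mxE; ring. Qed.

Lemma spec_cst a P : spec a a P = a%:M.
Proof. by rewrite spec_alt subrr scale0r addr0. Qed.

Lemma spec_tr a b P : isproj P -> spec a b P 0 0 + spec a b P 1 1 = a + b.
Proof. move=> [h1 [h2 h3]]; have e2 : P 1 1 = 1 - P 0 0 by lra.
rewrite !specE /= e2; lra. Qed.

Lemma spec_det a b P : isproj P ->
  spec a b P 0 0 * spec a b P 1 1 - spec a b P 0 1 * spec a b P 1 0 = a * b.
Proof.
move=> [h1 [h2 h3]].
have e2 : P 1 1 = 1 - P 0 0 by lra.
rewrite e2 in h3.
have E : (a - b) ^+ 2 * (P 0 0 * (1 - P 0 0) - P 0 1 ^+ 2) = 0 by rewrite h3 subrr mulr0.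
rewrite !specE /= -h1 e2; lra.
Qed.

Lemma spec_uniq1 a b c P Q : isproj P -> isproj Q -> spec a b Q = spec a c P ->
  forall f : R -> R, spec (f a) (f b) Q = spec (f a) (f c) P.
Proof.
move=> hP hQ E f.
have bc : b = c.
  by move: (spec_tr a b hQ) (spec_tr a c hP); rewrite E => -> /addrI.
subst c.
have [ab|ab] := eqVneq a b.
  by subst b; rewrite !spec_cst.
move: E; rewrite !spec_alt => /addrI /(congr1 (fun M => (a - b)^-1 *: M)).
by rewrite !scalerA mulVf ?subr_eq0 // !scale1r => ->.
Qed.

Lemma spec_uniq a b c d P Q : isproj P -> isproj Q -> spec a b Q = spec c d P ->
  forall f : R -> R, spec (f a) (f b) Q = spec (f c) (f d) P.
Proof.
move=> hP hQ E f.
have T : a + b = c + d by rewrite -(spec_tr a b hQ) -(spec_tr c d hP) E.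
have D : a * b = c * d by rewrite -(spec_det a b hQ) -(spec_det c d hP) E.
have : (a - c) * (a - d) = 0.
  have T' : a * (a + b) = a * (c + d) by rewrite T.
  lra.
move/eqP; rewrite mulf_eq0 !subr_eq0 => /orP[/eqP ac|/eqP ad].
  subst c; exact: spec_uniq1 E f.
subst d; rewrite (spec_swap c a P) in E; rewrite (spec_swap (f c) (f a) P).
have hP2 := isprojC hP. exact: (spec_uniq1 hP2 hQ E f).
Qed.

Lemma logm_spec a b P : 0 < a -> 0 < b -> isproj P ->
  logm (spec a b P) = spec (ln a) (ln b) P.
Proof.
move=> a0 b0 hP; rewrite /logm.
set S := spec a b P.
have ex : exists L : 'M[R]_2, symmetric2 L /\ expm L = S.
  exists (spec (ln a) (ln b) P); split; first exact: sym_spec.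
  by rewrite expm_spec // !lnK.
case: (getPex ex); set L := get _ => symL expL.
have [l1 [l2 [Q [hQ [_ EL]]]]] := spectral (sym01 symL).
move: expL; rewrite EL expm_spec // => E.
by rewrite -(spec_uniq hP hQ E (@ln R)) !expRK.
Qed.

Definition asym (S T : nat -> 'M[R]_2) := exists C, 0 < C /\ forall m u v,
  0 <= qf (S m) u v /\ 0 <= qf (T m) u v /\
  qf (S m) u v <= C * qf (T m) u v /\ qf (T m) u v <= C * qf (S m) u v.

Lemma asym_sym S T : asym S T -> asym T S.
Proof. move=> [C [C0 H]]; exists C; split => // m u v; have := H m u v; tauto. Qed.

Lemma asym_trans S T U : asym S T -> asym T U -> asym S U.
Proof.
move=> [C [C0 H]] [D [D0 K]]; exists (C * D); split; first exact: mulr_gt0.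
move=> m u v; have [h1 [h2 [h3 h4]]] := H m u v; have [k1 [k2 [k3 k4]]] := K m u v.
split => //; split => //; split; nra.
Qed.

Lemma asym_add S S' T T' : asym S S' -> asym T T' ->
  asym (fun m => S m + T m) (fun m => S' m + T' m).
Proof.
move=> [C [C0 H]] [D [D0 K]]; exists (C + D); split; first exact: addr_gt0.
move=> m u v; have [h1 [h2 [h3 h4]]] := H m u v; have [k1 [k2 [k3 k4]]] := K m u v.
rewrite !qfD; split; first exact: addr_ge0.
split; first exact: addr_ge0.
split; nra.
Qed.

Definition EE a b P (m : nat) := spec (expR (m%:R * a)) (expR (m%:R * b)) P.

Lemma EE_expm a b P m : isproj P -> expm (m%:R *: spec a b P) = EE a b P m.
Proof.
move=> hP; rewrite /EE -expm_spec //; congr expm.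
by rewrite /spec scalerDr !scalerA.
Qed.

Lemma qf_EE_ge0 a b P m u v : isproj P -> 0 <= qf (EE a b P m) u v.
Proof.
move=> hP; rewrite qf_spec addr_ge0 // mulr_ge0 ?expR_ge0 ?qf_proj_ge0 //.
exact: isprojC.
Qed.

Lemma asym_refl a b P : isproj P -> asym (EE a b P) (EE a b P).
Proof.
move=> hP; exists 1; split => // m u v; rewrite mul1r qf_EE_ge0 //; tauto.
Qed.

Lemma expR_mono (m : nat) (a b : R) : a <= b -> expR (m%:R * a) <= expR (m%:R * b).
Proof. by move=> ab; rewrite ler_expR ler_wpM2l. Qed.

Lemma psd_lb A u v : A 0 1 = A 1 0 ->
  (A 0 0 * A 1 1 - A 0 1 * A 1 0) * (u ^+ 2 + v ^+ 2) <= (A 0 0 + A 1 1) * qf A u v.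
Proof.
move=> h; rewrite /qf -h.
have E : (A 0 0 + A 1 1) * (A 0 0 * u ^+ 2 + (A 0 1 + A 0 1) * u * v + A 1 1 * v ^+ 2)
  - (A 0 0 * A 1 1 - A 0 1 * A 0 1) * (u ^+ 2 + v ^+ 2)
  = (A 0 0 * u + A 0 1 * v) ^+ 2 + (A 0 1 * u + A 1 1 * v) ^+ 2 by ring.
rewrite -subr_ge0 E; exact: addr_ge0 (sqr_ge0 _) (sqr_ge0 _).
Qed.

Lemma proj_eq P Q : isproj P -> isproj Q -> P 0 0 = Q 0 0 -> P 0 1 = Q 0 1 -> P = Q.
Proof.
move=> [h1 [h2 _]] [g1 [g2 _]] e1 e2; apply: mx2P => //.
- by rewrite -h1 -g1.
- lra.
Qed.

Lemma sep P Q : isproj P -> isproj Q -> P != Q ->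
  exists C, 0 < C /\ forall u v, qf (1 - P) u v <= C * (qf P u v + qf Q u v).
Proof.
move=> hP hQ PQ.
pose dd := (P 0 0 - Q 0 0) ^+ 2 + (P 0 1 - Q 0 1) ^+ 2.
have dd0 : 0 < dd.
  rewrite lt_def addr_ge0 ?sqr_ge0 // andbT paddr_eq0 ?sqr_ge0 // !sqrf_eq0 !subr_eq0.
  apply: contra PQ => /andP[/eqP e1 /eqP e2]; apply/eqP; exact: proj_eq.
exists (2 / dd); split; first by rewrite divr_gt0.
move=> u v.
have [h1 [h2 h3]] := hP; have [g1 [g2 g3]] := hQ.
have dt : (P + Q) 0 0 * (P + Q) 1 1 - (P + Q) 0 1 * (P + Q) 1 0 = dd.
  rewrite !mxE /dd -h1 -g1.
  have e2 : P 1 1 = 1 - P 0 0 by lra.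
  have f2 : Q 1 1 = 1 - Q 0 0 by lra.
  rewrite e2 f2; rewrite e2 in h3; rewrite f2 in g3; lra.
have tr : (P + Q) 0 0 + (P + Q) 1 1 = 2 by rewrite !mxE; lra.
have := psd_lb u v (_ : (P + Q) 0 1 = (P + Q) 1 0).
rewrite dt tr qfD => /(_ _) H.
have {}H : dd * (u ^+ 2 + v ^+ 2) <= 2 * (qf P u v + qf Q u v) by apply: H; rewrite !mxE h1 g1.
rewrite qf_compl.
have hx := qf_proj_ge0 u v hP.
rewrite mulrAC ler_pdivlMr //; nra.
Qed.

Lemma qf_EE a b P m u v : isproj P ->
  qf (EE a b P m) u v = expR (m%:R * a) * qf P u v + expR (m%:R * b) * (u ^+ 2 + v ^+ 2 - qf P u v).
Proof. by move=> hP; rewrite /EE qf_spec qf_compl. Qed.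

Lemma expR_max (m : nat) (a b : R) :
  expR (m%:R * Num.max a b) = Num.max (expR (m%:R * a)) (expR (m%:R * b)).
Proof.
have [le|lt] := leP a b.
  by rewrite max_r // expR_mono.
by rewrite max_l // expR_mono // ltW.
Qed.

Lemma max_facts (x y : R) : 0 <= x -> 0 <= y ->
  x <= Num.max x y /\ y <= Num.max x y /\ Num.max x y <= x + y.
Proof.
move=> x0 y0; have [le|lt] := leP x y; split => //; lra.
Qed.

Lemma two_term a1 a2 b1 b2 P Q : isproj P -> isproj Q -> a2 <= a1 -> b2 <= b1 -> b1 <= a1 ->
  exists c1 c2 S, isproj S /\ c2 <= c1 /\
    asym (fun m => EE a1 a2 P m + EE b1 b2 Q m) (EE c1 c2 S).
Proof.
move=> hP hQ h21 g21 ba.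
have [PQ|PQ] := eqVneq P Q.
  subst Q.
  exists a1, (Num.max a2 b2), P; split => //; split.
    by rewrite ge_max h21 /= (le_trans g21).
  exists 2; split => // m u v.
  have x0 := qf_proj_ge0 u v hP.
  have y0 : 0 <= u ^+ 2 + v ^+ 2 - qf P u v by rewrite -qf_compl; apply: qf_proj_ge0; exact: isprojC.
  rewrite qfD !qf_EE // expR_max.
  set x := qf P u v in x0 y0 *; set y := (u ^+ 2 + v ^+ 2 - x) in y0 *.
  have eA := expR_gt0 (m%:R * a1); have eA2 := expR_gt0 (m%:R * a2).
  have eB1 := expR_gt0 (m%:R * b1); have eB2 := expR_gt0 (m%:R * b2).
  have bA := expR_mono m ba.
  have [M1 [M2 M3]] := max_facts (ltW eA2) (ltW eB2).
  set A := expR (m%:R * a1) in eA bA *; set A2 := expR (m%:R * a2) in eA2 M1 M2 M3 *.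
  set B1 := expR (m%:R * b1) in eB1 bA *; set B2 := expR (m%:R * b2) in eB2 M1 M2 M3 *.
  set M := Num.max A2 B2 in M1 M2 M3 *.
  have p1 : 0 <= A * x by nra.
  have p2 : 0 <= A2 * y by nra.
  have p3 : 0 <= B1 * x by nra.
  have p4 : 0 <= B2 * y by nra.
  have q1 : B1 * x <= A * x by nra.
  have q2 : A2 * y <= M * y by nra.
  have q3 : B2 * y <= M * y by nra.
  have q4 : M * y <= A2 * y + B2 * y by nra.
  split; first lra. split; first lra. split; lra.
have [C [C0 HC]] := sep hP hQ PQ.
exists a1, (Num.max a2 b1), P; split => //; split.
  by rewrite ge_max h21 ba.
exists (2 + C); split; first by rewrite addr_gt0.
move=> m u v.
have x0 := qf_proj_ge0 u v hP.
have s0 := qf_proj_ge0 u v hQ.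
have y0 : 0 <= u ^+ 2 + v ^+ 2 - qf P u v by rewrite -qf_compl; apply: qf_proj_ge0; exact: isprojC.
have t0 : 0 <= u ^+ 2 + v ^+ 2 - qf Q u v by rewrite -qf_compl; apply: qf_proj_ge0; exact: isprojC.
have hc := HC u v; rewrite qf_compl in hc.
rewrite qfD !qf_EE // expR_max.
set x := qf P u v in x0 y0 hc *; set y := (u ^+ 2 + v ^+ 2 - x) in y0 hc *.
set s := qf Q u v in s0 t0 hc *; set t := (u ^+ 2 + v ^+ 2 - s) in t0 *.
have ys : y + x = s + t by rewrite /y /t; ring.
have eA := expR_gt0 (m%:R * a1); have eA2 := expR_gt0 (m%:R * a2).
have eB1 := expR_gt0 (m%:R * b1); have eB2 := expR_gt0 (m%:R * b2).
have bA := expR_mono m ba.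
have g' := expR_mono m g21.
have h' := expR_mono m h21.
have [M1 [M2 M3]] := max_facts (ltW eA2) (ltW eB1).
set A := expR (m%:R * a1) in eA bA h' *; set A2 := expR (m%:R * a2) in eA2 h' M1 M2 M3 *.
set B1 := expR (m%:R * b1) in eB1 bA g' M1 M2 M3 *; set B2 := expR (m%:R * b2) in eB2 g' *.
set M := Num.max A2 B1 in M1 M2 M3 *.
have k1 : B1 * y <= C * (B1 * x + B1 * s).
  have := ler_wpM2l (ltW eB1) hc; nra.
have p1 : 0 <= A * x by nra.
have p2 : 0 <= A2 * y by nra.
have p3 : 0 <= B1 * s by nra.
have p4 : 0 <= B2 * t by nra.
have q1 : B1 * s + B2 * t <= B1 * x + B1 * y by nra.
have q2 : B1 * x <= A * x by nra.
have k2 : C * (B1 * x) <= C * (A * x) by rewrite ler_pM2l.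
have q3 : A2 * y <= M * y by nra.
have q4 : B1 * y <= M * y by nra.
have q5 : M * y <= A2 * y + B1 * y by nra.
have q6 : 0 <= C * (B1 * s) by nra.
have q7 : 0 <= C * (A * x) by nra.
have q8 : 0 <= C * (A2 * y) by nra.
have q9 : 0 <= C * (B2 * t) by nra.
have q10 : 0 <= M * y by nra.
have q11 : 0 <= C * (M * y) by nra.
split; first lra. split; first lra. split; lra.
Qed.

Lemma proj_entries P : isproj P ->
  0 <= P 0 0 <= 1 /\ P 1 1 = 1 - P 0 0 /\ P 1 0 = P 0 1 /\ P 0 1 ^+ 2 <= 1.
Proof.
move=> [h1 [h2 h3]]; have e2 : P 1 1 = 1 - P 0 0 by lra.
rewrite e2 in h3.
have q0 : 0 <= P 0 1 ^+ 2 := sqr_ge0 _.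
have a : 0 <= P 0 0 <= 1 by apply/andP; split; nra.
split => //; split => //; split => //; nra.
Qed.

Lemma eig_bounds S c1 c2 P C (m : nat) : isproj P -> c2 <= c1 -> 0 < C ->
  symmetric2 S ->
  (forall u v, qf S u v <= C * qf (EE c1 c2 P m) u v /\ qf (EE c1 c2 P m) u v <= C * qf S u v) ->
  exists s1 s2 Rm, isproj Rm /\ S = spec s1 s2 Rm /\ 0 < s2 /\ s2 <= s1 /\
    expR (m%:R * c1) <= C * s1 /\ s1 <= C * expR (m%:R * c1) /\
    expR (m%:R * c2) <= C * s2 /\ s2 <= C * expR (m%:R * c2) /\
    s1 * ((Rm 0 0 - P 0 0) ^+ 2 + (Rm 0 1 - P 0 1) ^+ 2) <= C * expR (m%:R * c2).
Proof.
move=> hP c21 C0 symS H.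
have [s1 [s2 [Rm [hR [s21 ES]]]]] := spectral (sym01 symS).
have e21 := expR_mono m c21.
set E1 := expR (m%:R * c1) in e21 *; set E2 := expR (m%:R * c2) in e21 *.
have E10 : 0 < E1 := expR_gt0 _. have E20 : 0 < E2 := expR_gt0 _.
have qE u v : qf (EE c1 c2 P m) u v = E1 * qf P u v + E2 * (u ^+ 2 + v ^+ 2 - qf P u v) by rewrite qf_EE.
have qS u v : qf S u v = s1 * qf Rm u v + s2 * (u ^+ 2 + v ^+ 2 - qf Rm u v) by rewrite ES qf_spec qf_compl.
have [w1 [w1' [n1 K1]]] := kerv (isprojC hR).
have [w3 [w3' [n3 K3]]] := kerv hR.
have [w2 [w2' [n2 K2]]] := kerv (isprojC hP).
have [w4 [w4' [n4 K4]]] := kerv hP.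
have zR1 : qf (1 - Rm) w1 w1' = 0 by rewrite (K1 _ (isprojC hR)) !subrr expr0n /= addr0 mulr0.
have zR3 : qf Rm w3 w3' = 0 by rewrite (K3 _ hR) !subrr expr0n /= addr0 mulr0.
have zP2 : qf (1 - P) w2 w2' = 0 by rewrite (K2 _ (isprojC hP)) !subrr expr0n /= addr0 mulr0.
have zP4 : qf P w4 w4' = 0 by rewrite (K4 _ hP) !subrr expr0n /= addr0 mulr0.
rewrite qf_compl in zR1; rewrite qf_compl in zP2.
have [a1 a2] := H w1 w1'; rewrite qE qS in a1 a2.
have [b1 b2] := H w2 w2'; rewrite qE qS in b1 b2.
have [c1' c2'] := H w3 w3'; rewrite qE qS in c1' c2'.
have [d1 d2] := H w4 w4'; rewrite qE qS in d1 d2.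
have xP1 := qf_proj_ge0 w1 w1' hP.
have yP1 : qf P w1 w1' <= w1 ^+ 2 + w1' ^+ 2.
  have := qf_proj_ge0 w1 w1' (isprojC hP); rewrite qf_compl; lra.
have xR2 := qf_proj_ge0 w2 w2' hR.
have yR2 : qf Rm w2 w2' <= w2 ^+ 2 + w2' ^+ 2.
  have := qf_proj_ge0 w2 w2' (isprojC hR); rewrite qf_compl; lra.
have xP3 := qf_proj_ge0 w3 w3' hP.
have yP3 : qf P w3 w3' <= w3 ^+ 2 + w3' ^+ 2.
  have := qf_proj_ge0 w3 w3' (isprojC hP); rewrite qf_compl; lra.
have xR4 := qf_proj_ge0 w4 w4' hR.
have yR4 : qf Rm w4 w4' <= w4 ^+ 2 + w4' ^+ 2.
  have := qf_proj_ge0 w4 w4' (isprojC hR); rewrite qf_compl; lra.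
have i1 : s1 <= C * E1.
  have h : s1 * (w1 ^+ 2 + w1' ^+ 2) <= C * E1 * (w1 ^+ 2 + w1' ^+ 2).
    have t1 : E2 * (w1 ^+ 2 + w1' ^+ 2 - qf P w1 w1') <= E1 * (w1 ^+ 2 + w1' ^+ 2 - qf P w1 w1') by nra.
    have eR : qf Rm w1 w1' = w1 ^+ 2 + w1' ^+ 2 by lra.
    rewrite eR subrr mulr0 addr0 in a1.
    have t2 : C * (E2 * (w1 ^+ 2 + w1' ^+ 2 - qf P w1 w1')) <= C * (E1 * (w1 ^+ 2 + w1' ^+ 2 - qf P w1 w1')) by rewrite ler_pM2l.
    nra.
  by rewrite -(ler_pM2r n1).
have i2 : E1 <= C * s1.
  have h : E1 * (w2 ^+ 2 + w2' ^+ 2) <= C * s1 * (w2 ^+ 2 + w2' ^+ 2).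
    have ep : qf P w2 w2' = w2 ^+ 2 + w2' ^+ 2 by lra.
    rewrite ep subrr mulr0 addr0 in b2.
    have t1 : s2 * (w2 ^+ 2 + w2' ^+ 2 - qf Rm w2 w2') <= s1 * (w2 ^+ 2 + w2' ^+ 2 - qf Rm w2 w2') by nra.
    nra.
  by rewrite -(ler_pM2r n2).
have C1 : 1 <= C.
  have h : 1 * E1 <= (C * C) * E1.
    have : C * s1 <= C * (C * E1) by rewrite ler_pM2l.
    rewrite mul1r -mulrA; lra.
  rewrite ler_pM2r // in h.
  rewrite leNgt; apply/negP => Clt.
  have : C * C < 1 * 1 by apply: ltr_pM => //; exact: ltW.
  lra.
have i3 : E2 <= C * s2.
  have h : E2 * (w3 ^+ 2 + w3' ^+ 2) <= C * s2 * (w3 ^+ 2 + w3' ^+ 2).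
    rewrite zR3 mulr0 add0r subr0 in c2'.
    have t1 : E2 * qf P w3 w3' <= E1 * qf P w3 w3' by nra.
    nra.
  by rewrite -(ler_pM2r n3).
have s20 : 0 < s2.
  have : 0 < C * s2 by apply: lt_le_trans i3.
  by rewrite pmulr_rgt0.
have i4 : s2 <= C * E2.
  have h : s2 * (w4 ^+ 2 + w4' ^+ 2) <= C * E2 * (w4 ^+ 2 + w4' ^+ 2).
    rewrite zP4 mulr0 add0r subr0 in d1.
    have t1 : s2 * qf Rm w4 w4' <= s1 * qf Rm w4 w4' by nra.
    nra.
  by rewrite -(ler_pM2r n4).
have i5 : s1 * ((Rm 0 0 - P 0 0) ^+ 2 + (Rm 0 1 - P 0 1) ^+ 2) <= C * E2.
  rewrite K4 // in d1.
  rewrite zP4 mulr0 add0r subr0 in d1.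
  set dd := (Rm 0 0 - P 0 0) ^+ 2 + (Rm 0 1 - P 0 1) ^+ 2 in d1 *.
  have dd0 : 0 <= dd by rewrite /dd addr_ge0 ?sqr_ge0.
  have ddn : (w4 ^+ 2 + w4' ^+ 2) * dd <= w4 ^+ 2 + w4' ^+ 2.
    by rewrite -K4 //.
  have t0 : 0 <= s2 * (w4 ^+ 2 + w4' ^+ 2 - (w4 ^+ 2 + w4' ^+ 2) * dd) by nra.
  have h : s1 * dd * (w4 ^+ 2 + w4' ^+ 2) <= C * E2 * (w4 ^+ 2 + w4' ^+ 2) by nra.
  by rewrite -(ler_pM2r n4).
by exists s1, s2, Rm.
Qed.

Lemma abs_le_sq (a b : R) : 0 <= b -> a ^+ 2 <= b ^+ 2 -> `|a| <= b.
Proof. move=> b0 h; rewrite ler_norml; apply/andP; split; nra. Qed.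

Lemma proj_entry_bounds Rm P i j : isproj Rm -> isproj P ->
  `|Rm i j| <= 1 /\ `|(i == j)%:R - Rm i j| <= 1 /\
  (Rm i j - P i j) ^+ 2 <= (Rm 0 0 - P 0 0) ^+ 2 + (Rm 0 1 - P 0 1) ^+ 2.
Proof.
move=> hR hP.
have [/andP[r0 r1] [r2 [r3 r4]]] := proj_entries hR.
have [/andP[p0 p1] [p2 [p3 p4]]] := proj_entries hP.
have s1 := sqr_ge0 (Rm 0 0 - P 0 0); have s2 := sqr_ge0 (Rm 0 1 - P 0 1).
have a1 : `|Rm 0 1| <= 1 by apply: abs_le_sq; rewrite ?expr1n.
case: (ord2 i) => ->; case: (ord2 j) => -> /=.
- split; first by rewrite ger0_norm //.
  split; first by rewrite ger0_norm ?subr_ge0 //; lra.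
  lra.
- split => //; split; first by rewrite sub0r normrN.
  lra.
- rewrite r3 p3; split => //; split; first by rewrite sub0r normrN.
  lra.
- rewrite r2 p2; split; first by rewrite ger0_norm; lra.
  split; first by rewrite ger0_norm; lra.
  have -> : 1 - Rm 0 0 - (1 - P 0 0) = - (Rm 0 0 - P 0 0) by ring.
  rewrite sqrrN; lra.
Qed.

Lemma entry_bound S c1 c2 P C (m : nat) i j : isproj P -> c2 <= c1 -> 0 < C ->
  symmetric2 S ->
  (forall u v, qf S u v <= C * qf (EE c1 c2 P m) u v /\ qf (EE c1 c2 P m) u v <= C * qf S u v) ->
  (0 < m)%N ->
  `|(m%:R^-1 *: logm S) i j - spec c1 c2 P i j| <=
     4 * ln C * (m.+1%:R)^-1 + (c1 - c2) * (C * expR ((c2 - c1) / 2) ^+ m).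
Proof.
move=> hP c21 C0 symS H m0.
have [s1 [s2 [Rm [hR [ES [s20 [s21 [i2 [i1 [i3 [i4 i5]]]]]]]]]]] := eig_bounds hP c21 C0 symS H.
have s10 : 0 < s1 by exact: lt_le_trans s21.
set E1 := expR (m%:R * c1) in i1 i2 *; set E2 := expR (m%:R * c2) in i3 i4 i5 *.
have E10 : 0 < E1 := expR_gt0 _. have E20 : 0 < E2 := expR_gt0 _.
have C1 : 1 <= C.
  have h : 1 * E1 <= (C * C) * E1.
    have : C * s1 <= C * (C * E1) by rewrite ler_pM2l.
    rewrite mul1r -mulrA; lra.
  rewrite ler_pM2r // in h.
  rewrite leNgt; apply/negP => Clt.
  have : C * C < 1 * 1 by apply: ltr_pM => //; exact: ltW.
  lra.
have lnC0 : 0 <= ln C by rewrite ln_ge0.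
have mpos : 0 < m%:R :> R by rewrite ltr0n.
set k := m%:R^-1.
have k0 : 0 < k by rewrite /k invr_gt0.
have mk : m%:R * k = 1 by rewrite /k mulfV // gt_eqF.
have lnE1 : ln E1 = m%:R * c1 by rewrite /E1 expRK.
have lnE2 : ln E2 = m%:R * c2 by rewrite /E2 expRK.
have pos x : 0 < x -> x \is Num.pos by [].
have L1 : ln s1 <= ln C + m%:R * c1.
  by rewrite -lnE1 -lnM ?pos ?ler_ln ?pos // mulr_gt0.
have L2 : m%:R * c1 <= ln C + ln s1.
  by rewrite -lnE1 -lnM ?pos ?ler_ln ?pos // mulr_gt0.
have L3 : ln s2 <= ln C + m%:R * c2.
  by rewrite -lnE2 -lnM ?pos ?ler_ln ?pos // mulr_gt0.
have L4 : m%:R * c2 <= ln C + ln s2.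
  by rewrite -lnE2 -lnM ?pos ?ler_ln ?pos // mulr_gt0.
rewrite ES logm_spec //.
have [b1 [b2 b3]] := proj_entry_bounds i j hR hP.
rewrite !mxE.
set r := Rm i j; set p := P i j; set dl := (i == j)%:R.
set g1 := ln s1 * k - c1; set g2 := ln s2 * k - c2.
have -> : k * (ln s1 * r + ln s2 * (dl - r)) - (c1 * p + c2 * (dl - p))
   = g1 * r + g2 * (dl - r) + (c1 - c2) * (r - p) by rewrite /g1 /g2; ring.
have G1 : `|g1| <= ln C * k.
  have -> : g1 = (ln s1 - m%:R * c1) * k by rewrite /g1 mulrBl mulrAC mk mul1r.
  rewrite normrM (gtr0_norm k0) ler_pM2r // ler_norml; apply/andP; split; lra.
have G2 : `|g2| <= ln C * k.
  have -> : g2 = (ln s2 - m%:R * c2) * k by rewrite /g2 mulrBl mulrAC mk mul1r.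
  rewrite normrM (gtr0_norm k0) ler_pM2r // ler_norml; apply/andP; split; lra.
set w := expR ((c2 - c1) / 2).
have w0 : 0 < w := expR_gt0 _.
have hwm : (w ^+ m) ^+ 2 * E1 = E2.
  rewrite /w -expRM_natl -expRM_natl /E1 -expRD /E2; congr expR.
  by field.
have G3 : `|r - p| <= C * w ^+ m.
  apply: abs_le_sq; first by rewrite mulr_ge0 // ?exprn_ge0 // ltW.
  set dd := (Rm 0 0 - P 0 0) ^+ 2 + (Rm 0 1 - P 0 1) ^+ 2 in b3 i5.
  have dd0 : 0 <= dd by rewrite /dd addr_ge0 ?sqr_ge0.
  have h1 : E1 * dd <= C * s1 * dd by rewrite ler_wpM2r.
  have h2 : E1 * dd <= C * (C * E2) by rewrite (le_trans h1) // -mulrA ler_pM2l.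
  have h3 : dd * E1 <= (C * w ^+ m) ^+ 2 * E1.
    rewrite exprMn -mulrA hwm mulrC.
    have -> : C ^+ 2 * E2 = C * (C * E2) by rewrite expr2 mulrA.
    exact: h2.
  rewrite ler_pM2r // in h3.
  exact: le_trans h3.
have hrp : 0 <= c1 - c2 by rewrite subr_ge0.
have e1 : `|g1 * r| <= ln C * k.
  by rewrite normrM (le_trans (ler_wpM2l (normr_ge0 _) b1)) // mulr1.
have e2 : `|g2 * (dl - r)| <= ln C * k.
  by rewrite normrM (le_trans (ler_wpM2l (normr_ge0 _) b2)) // mulr1.
have e3 : `|(c1 - c2) * (r - p)| <= (c1 - c2) * (C * w ^+ m) by rewrite normrM ger0_norm // ler_wpM2l.
apply: (le_trans (ler_normD _ _)).
apply: (@le_trans _ _ (ln C * k + ln C * k + (c1 - c2) * (C * w ^+ m))).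
  by apply: lerD => //; apply: (le_trans (ler_normD _ _)); exact: lerD.
apply: lerD => //.
have hm1 : 0 < m.+1%:R :> R by rewrite ltr0n.
have hk : k <= 2 * (m.+1%:R)^-1.
  have mn : m%:R != 0 :> R by rewrite gt_eqF.
  have mn1 : m.+1%:R != 0 :> R by rewrite gt_eqF.
  have hm2 : m.+1%:R <= 2 * m%:R :> R by rewrite -natrM ler_nat mul2n -addnn -addn1 leq_add2l.
  rewrite /k -(ler_pM2r hm1) -mulrA mulVf // mulr1.
  by rewrite -(ler_pM2l mpos) mulrA mulfV // mul1r mulrC.
have h := ler_wpM2l lnC0 hk.
apply: (le_trans (lerD h h)).
by rewrite (_ : _ + _ = 4 * ln C * (m.+1%:R)^-1) //; ring.
Qed.

Local Open Scope classical_set_scope.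
Local Open Scope ring_scope.

Lemma mx2_decomp (M : 'M[R]_2) : M = M 0 0 *: delta_mx 0 0 + M 0 1 *: delta_mx 0 1 +
   M 1 0 *: delta_mx 1 0 + M 1 1 *: delta_mx 1 1.
Proof. by apply: mx2P; rewrite !mxE /=; ring. Qed.

Lemma mx2_cvg (F : nat -> 'M[R]_2) (Z : 'M[R]_2) :
  (forall i j, (fun m => F m i j) @ \oo --> Z i j) -> F @ \oo --> Z.
Proof.
move=> H.
have -> : F = (fun m => F m 0 0 *: delta_mx 0 0 + F m 0 1 *: delta_mx 0 1 +
   F m 1 0 *: delta_mx 1 0 + F m 1 1 *: delta_mx 1 1).
  by apply/funext => m; exact: mx2_decomp.
rewrite [X in _ --> X]mx2_decomp.
by apply: cvgD; [apply: cvgD; [apply: cvgD|]|]; apply: cvgZr_tmp; apply: H.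
Qed.

Lemma lim_asym S c1 c2 P : isproj P -> c2 <= c1 -> (forall m, symmetric2 (S m)) ->
  asym S (EE c1 c2 P) ->
  limn (fun m => m%:R^-1 *: logm (S m)) = spec c1 c2 P.
Proof.
move=> hP c21 symS [C [C0 H]].
apply: (cvg_lim (@norm_hausdorff _ _)); apply: mx2_cvg => i j /=.
set w := expR ((c2 - c1) / 2).
pose g := fun m : nat => 4 * ln C * harmonic m + (c1 - c2) * (C * w ^+ m).
have g0 : g @ \oo --> 0.
  have [L [hL hL0]] : exists L, (fun m => w ^+ m) @ \oo --> L /\ (c1 - c2) * L = 0.
    have [e|ne] := eqVneq c1 c2.
      exists 1; split; last by rewrite e subrr mul0r.
      have -> : (fun m => w ^+ m) = fun=> 1.
        by apply/funext => m; rewrite /w e subrr mul0r expR0 expr1n.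
      exact: cvg_cst.
    exists 0; split; last by rewrite mulr0.
    apply: cvg_expr; rewrite ger0_norm ?expR_ge0 // expR_lt1.
    rewrite pmulr_llt0 ?invr_gt0 // subr_lt0 lt_def ne c21; by [].
  have -> : (0 : R) = 4 * ln C * 0 + (c1 - c2) * (C * L) by rewrite mulrCA hL0 !mulr0 addr0.
  apply: cvgD.
    by apply: cvgMl_tmp; exact: cvg_harmonic.
  by apply: cvgMl_tmp; apply: cvgMl_tmp; exact: hL.
apply: (@squeeze_cvgr _ _ _ _ (fun m => spec c1 c2 P i j - g m) (fun m => spec c1 c2 P i j + g m)).
- near=> m.
  have m0 : (0 < m)%N by near: m; exact: nbhs_infty_gt.
  have H' : forall u v, qf (S m) u v <= C * qf (EE c1 c2 P m) u v /\ qf (EE c1 c2 P m) u v <= C * qf (S m) u v.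
    by move=> u v; have [_ [_ [h1 h2]]] := H m u v.
  have := entry_bound i j hP c21 C0 (symS m) H' m0.
  rewrite /g /harmonic /= -/w ler_norml => /andP[a b].
  set F := (m%:R^-1 *: logm (S m)) i j in a b *.
  set Zc := spec c1 c2 P i j in a b *.
  set G := 4 * ln C / m.+1%:R + (c1 - c2) * (C * w ^+ m) in a b *.
  apply/andP; split; lra.
- rewrite -[X in _ --> X]subr0; apply: cvgB => //; exact: cvg_cst.
- rewrite -[X in _ --> X]addr0; apply: cvgD => //; exact: cvg_cst.
Unshelve. all: by end_near.
Qed.

Definition Sseq (X : seq 'M[R]_2) (m : nat) := \sum_(Xi <- X) expm (m%:R *: Xi).

Lemma memX (x y : 'M[R]_2) X : y \in X -> y \in x :: X.
Proof. by move=> h; rewrite in_cons h orbT. Qed.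

Lemma sym_Sseq X m : (forall A, A \in X -> symmetric2 A) -> symmetric2 (Sseq X m).
Proof.
elim: X => [|x X IH] hX; first by rewrite /Sseq big_nil /symmetric2 trmx0.
have [a [b [P [hP [ba ex]]]]] := spectral (sym01 (hX x (mem_head _ _))).
rewrite /Sseq big_cons /symmetric2 raddfD.
have IHe := IH (fun A h => hX A (memX x h)); rewrite /Sseq /symmetric2 in IHe.
congr (_ + _); last exact: IHe.
rewrite ex EE_expm //; exact: (sym_spec _ _ hP).
Qed.

Lemma list_asym X : X != [::] -> (forall A, A \in X -> symmetric2 A) ->
  exists c1 c2 P, isproj P /\ c2 <= c1 /\ asym (Sseq X) (EE c1 c2 P).
Proof.
elim: X => [//|x X IH] _ hX.
have [a [b [P [hP [ba ex]]]]] := spectral (sym01 (hX x (mem_head _ _))).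
have Ex : forall m : nat, expm (m%:R *: x) = EE a b P m by move=> m; rewrite ex EE_expm.
case: X IH hX => [|y X] IH hX.
  exists a, b, P; split => //; split => //.
  have -> : Sseq [:: x] = EE a b P by apply/funext => m; rewrite /Sseq big_seq1 Ex.
  exact: asym_refl.
have [c1 [c2 [Q [hQ [c21 hA]]]]] := IH isT (fun A h => hX A (memX x h)).
have step1 : asym (Sseq (x :: y :: X)) (fun m => EE a b P m + EE c1 c2 Q m).
  have -> : Sseq (x :: y :: X) = fun m => EE a b P m + Sseq (y :: X) m.
    by apply/funext => m; rewrite /Sseq big_cons Ex.
  exact: asym_add (asym_refl a b hP) hA.
have [le|lt] := leP c1 a.
  have [d1 [d2 [T [hT [d21 hB]]]]] := two_term hP hQ ba c21 le.
  by exists d1, d2, T; split => //; split => //; exact: asym_trans step1 hB.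
have [d1 [d2 [T [hT [d21 hB]]]]] := two_term hQ hP c21 ba (ltW lt).
exists d1, d2, T; split => //; split => //; apply: asym_trans step1 _.
have -> : (fun m => EE a b P m + EE c1 c2 Q m) = fun m => EE c1 c2 Q m + EE a b P m.
  by apply/funext => m; rewrite addrC.
exact: hB.
Qed.

Lemma SupLE_asym X c1 c2 P : isproj P -> c2 <= c1 -> (forall A, A \in X -> symmetric2 A) ->
  asym (Sseq X) (EE c1 c2 P) -> SupLE X = spec c1 c2 P.
Proof.
move=> hP c21 hX hA; rewrite /SupLE.
exact: (lim_asym hP c21 (fun m => sym_Sseq m hX) hA).
Qed.
End M2.

Unset Implicit Arguments.

Theorem proposition1 (R : realType) (X Y : seq 'M[R]_2) :
  X != [::] -> Y != [::] ->
  (forall A, A \in X -> symmetric2 A) ->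
  (forall A, A \in Y -> symmetric2 A) ->
  SupLE (X ++ Y) = SupLE [:: SupLE X; SupLE Y].
Proof.
move=> X0 Y0 hX hY.
have hXY : forall A, A \in X ++ Y -> symmetric2 A.
  by move=> A; rewrite mem_cat => /orP[/hX|/hY].
have XY0 : X ++ Y != [::] by case: X X0 hX hXY.
have [a1 [a2 [P [hP [h21 AX]]]]] := list_asym X0 hX.
have [b1 [b2 [Q [hQ [g21 AY]]]]] := list_asym Y0 hY.
have [c1 [c2 [T [hT [c21 AXY]]]]] := list_asym XY0 hXY.
rewrite (SupLE_asym hP h21 hX AX) (SupLE_asym hQ g21 hY AY).
rewrite (SupLE_asym hT c21 hXY AXY).
have h2 : forall A, A \in [:: spec a1 a2 P; spec b1 b2 Q] -> symmetric2 A.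
  move=> A; rewrite !inE => /orP[/eqP->|/eqP->]; exact: sym_spec.
symmetry; apply: (SupLE_asym hT c21 h2).
apply: asym_trans AXY.
have -> : Sseq [:: spec a1 a2 P; spec b1 b2 Q] = fun m => EE a1 a2 P m + EE b1 b2 Q m.
  by apply/funext => m; rewrite /Sseq big_cons big_seq1 !EE_expm.
have -> : Sseq (X ++ Y) = fun m => Sseq X m + Sseq Y m.
  by apply/funext => m; rewrite /Sseq big_cat.
exact: asym_add (asym_sym AX) (asym_sym AY).
Qed.
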